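(* In the category $\mathbf{Tree}$, the classes of boundary-preserving morphisms and of free morphisms form an orthogonal factorisation system. In particular every morphism $\phi:\overline{\mathsf S}\to\overline{\mathsf T}$ factors, uniquely up to unique isomorphism, as a boundary-preserving morphism followed by a free morphism.
   Context: A polynomial endofunctor is a diagram of sets $P_0\xleftarrow{s}P_2\xrightarrow{p}P_1\xrightarrow{t}P_0$ with $p$ having finite fibres; a morphism is a triple of maps commuting with $s,p,t$ whose middle square is a pullback. A tree is a polynomial endofunctor with all sets finite, $t$ injective, $s$ injective with singleton complement (the root), and such that iterating $\sigma$ ($\sigma(\mathrm{root})=\mathrm{root}$, $\sigma(e)=t(p(e))$ for $e\in T_2$) brings every edge to the root. $\mathbf{TEmb}$ is the category of trees and such morphisms. For a tree $\mathsf T$, $\overline{\mathsf T}$ is the free polynomial monad $T_0\leftarrow\mathrm{sub}'(\mathsf T)\to\mathrm{sub}(\mathsf T)\to T_0$ ($\mathrm{sub}$ = subtrees, $\mathrm{sub}'$ = subtrees with marked leaf; maps: marked leaf, forget mark, root; multiplication by grafting). $\mathbf{Tree}$ has trees as objects and monad morphisms $\overline{\mathsf S}\to\overline{\mathsf T}$ as morphisms. A morphism $\phi:\overline{\mathsf S}\to\overline{\mathsf T}$ is boundary preserving if $\phi_1:\mathrm{sub}(\mathsf S)\to\mathrm{sub}(\mathsf T)$ sends the maximal subtree $\mathsf S$ to the maximal subtree $\mathsf T$. It is free if $\phi=\overline\alpha$ for some morphism $\alpha:\mathsf S\to\mathsf T$ in $\mathbf{TEmb}$ (where $\overline\alpha$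 sends a subtree to its image). *)

(* Defs.v *)
From mathcomp Require Import all_boot.
Set Implicit Arguments. Unset Strict Implicit. Unset Printing Implicit Defensive.

(* A polynomial endofunctor with finite sets  P0 <-s- P2 -p-> P1 -t-> P0
   (finite fibres of p are automatic). *)
Record poly := Poly {
  P0 : finType; P1 : finType; P2 : finType;
  ps : P2 -> P0; pp : P2 -> P1; pt : P1 -> P0 }.

Definition sigma_in (P : poly) (F : {set P2 P}) (r : P0 P) (e : P0 P) : P0 P :=
  if [pick f in F | ps f == e] is Some f then pt (pp f) else r.

(* The sub-diagram E <- F -> N -> E of P, with F := p^{-1}(N) (so that the
   inclusion has a pullback middle square), is closed under s,p,t and is a tree
   with root r. *)
Definition is_subtree_data (P : poly) (E : {set P0 P}) (N : {set P1 P}) (r : P0 P)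
  : Prop :=
  let F := [set f | pp f \in N] in
  [/\ (forall n, n \in N -> pt n \in E) /\ (forall f, f \in F -> ps f \in E),
      {in N &, injective (@pt P)} /\ {in F &, injective (@ps P)},
      r \in E,
      (forall e, e \in E -> (e \notin (@ps P) @: F) = (e == r))
    & (forall e, e \in E -> exists k, iter k (sigma_in F r) e = r)].

Definition is_tree (P : poly) : Prop := exists r, @is_subtree_data P setT setT r.

Record tree := Tree { tpoly :> poly; tree_ax : is_tree tpoly }.

(* Morphisms in TEmb (pullback middle square). *)
Definition temb (S T : tree) (a0 : P0 S -> P0 T) (a1 : P1 S -> P1 T)
  (a2 : P2 S -> P2 T) : Prop :=
  [/\ forall f, ps (a2 f) = a0 (ps f),
      forall f, pp (a2 f) = a1 (pp f),
      forall n, pt (a1 n) = a0 (pt n)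
    & forall n g, pp g = a1 n -> exists! f, pp f = n /\ a2 f = g].

Record subtree (T : tree) := Subtree {
  st_E : {set P0 T}; st_N : {set P1 T}; st_r : P0 T;
  st_ok : @is_subtree_data T st_E st_N st_r }.

Definition leaves (T : tree) (A : subtree T) : {set P0 T} :=
  st_E A :\: (@pt T @: st_N A).

Record msubtree (T : tree) := MSubtree {
  ms_tree : subtree T; ms_leaf : P0 T; ms_ok : ms_leaf \in leaves ms_tree }.

(* unit of the monad: e |-> trivial subtree with single edge e (graph form) *)
Definition is_unit (T : tree) (e : P0 T) (A : subtree T) : Prop :=
  st_E A = [set e] /\ st_N A = set0.

(* multiplication (grafting), graph form: C is the grafting of the family
   (B l)_{l leaf of A} onto A, where root (B l) = l. *)
Definition is_graft (T : tree) (A : subtree T) (B : P0 T -> subtree T)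
  (C : subtree T) : Prop :=
  [/\ forall l, l \in leaves A -> st_r (B l) = l,
      st_E C = st_E A :|: \bigcup_(l in leaves A) st_E (B l),
      st_N C = st_N A :|: \bigcup_(l in leaves A) st_N (B l)
    & st_r C = st_r A].

Definition is_max (T : tree) (A : subtree T) : Prop :=
  st_E A = setT /\ st_N A = setT.

(* Morphisms of Tree: monad morphisms  overline S -> overline T. *)
Record tmor (S T : tree) := TMor {
  m0 : P0 S -> P0 T;
  m1 : subtree S -> subtree T;
  m2 : msubtree S -> msubtree T;
  m_leaf : forall x, ms_leaf (m2 x) = m0 (ms_leaf x);
  m_forget : forall x, ms_tree (m2 x) = m1 (ms_tree x);
  m_root : forall A, st_r (m1 A) = m0 (st_r A);
  m_cart : forall A y, ms_tree y = m1 A ->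
             exists! x, ms_tree x = A /\ m2 x = y;
  m_unit : forall e A, is_unit e A -> is_unit (m0 e) (m1 A);
  m_mult : forall A B C, is_graft A B C ->
             forall B' : P0 T -> subtree T,
             (forall l, l \in leaves A -> B' (m0 l) = m1 (B l)) ->
             is_graft (m1 A) B' (m1 C) }.

Definition is_comp (A B C : tree) (f : tmor A B) (g : tmor B C) (h : tmor A C)
  : Prop :=
  [/\ forall x, m0 h x = m0 g (m0 f x),
      forall x, m1 h x = m1 g (m1 f x)
    & forall x, m2 h x = m2 g (m2 f x)].

Definition comm_sq (A B C D : tree) (f1 : tmor A B) (g1 : tmor B D)
  (f2 : tmor A C) (g2 : tmor C D) : Prop :=
  [/\ forall x, m0 g1 (m0 f1 x) = m0 g2 (m0 f2 x),
      forall x, m1 g1 (m1 f1 x) = m1 g2 (m1 f2 x)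
    & forall x, m2 g1 (m2 f1 x) = m2 g2 (m2 f2 x)].

Definition meq (A B : tree) (f g : tmor A B) : Prop :=
  [/\ forall x, m0 f x = m0 g x, forall x, m1 f x = m1 g x
    & forall x, m2 f x = m2 g x].

Definition is_iso (A B : tree) (f : tmor A B) : Prop :=
  exists g : tmor B A,
    [/\ (forall x, m0 g (m0 f x) = x) /\ (forall x, m0 f (m0 g x) = x),
        (forall x, m1 g (m1 f x) = x) /\ (forall x, m1 f (m1 g x) = x)
      & (forall x, m2 g (m2 f x) = x) /\ (forall x, m2 f (m2 g x) = x)].

Definition boundary_preserving (S T : tree) (phi : tmor S T) : Prop :=
  forall A, is_max A -> is_max (m1 phi A).

Definition free_mor (S T : tree) (phi : tmor S T) : Prop :=
  exists a0 a1 a2, temb a0 a1 a2 /\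
    (forall e, m0 phi e = a0 e) /\
    (forall A, st_E (m1 phi A) = a0 @: st_E A /\ st_N (m1 phi A) = a1 @: st_N A).

Definition morclass := forall S T : tree, tmor S T -> Prop.

Definition OFS (L R : morclass) : Prop :=
  (forall S T (f : tmor S T), is_iso f -> L S T f) /\
  (forall S T (f : tmor S T), is_iso f -> R S T f) /\
  (forall A B C (f : tmor A B) (g : tmor B C) (h : tmor A C),
      L _ _ f -> L _ _ g -> is_comp f g h -> L _ _ h) /\
  (forall A B C (f : tmor A B) (g : tmor B C) (h : tmor A C),
      R _ _ f -> R _ _ g -> is_comp f g h -> R _ _ h) /\
  (forall S T (phi : tmor S T), exists (X : tree) (e : tmor S X) (m : tmor X T),
      L _ _ e /\ R _ _ m /\ is_comp e m phi) /\
  (forall A B C D (e : tmor A B) (m : tmor C D) (u : tmor A C) (v : tmor B D),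
      L _ _ e -> R _ _ m -> comm_sq u m e v ->
      exists d : tmor B C, is_comp e d u /\ is_comp d m v /\
        forall d' : tmor B C, is_comp e d' u -> is_comp d' m v -> meq d d').

Definition unique_factorisation (L R : morclass) : Prop :=
  forall S T (phi : tmor S T) (X X' : tree) (e : tmor S X) (m : tmor X T)
    (e' : tmor S X') (m' : tmor X' T),
    L _ _ e -> R _ _ m -> is_comp e m phi ->
    L _ _ e' -> R _ _ m' -> is_comp e' m' phi ->
    exists i : tmor X X', is_iso i /\ is_comp e i e' /\ is_comp i m' m /\
      forall j : tmor X X', is_comp e j e' -> is_comp j m' m -> meq i j.

(* Main.v *)
Require Import Defs.
From mathcomp Require Import all_boot.
From Stdlib Require Import Classical ClassicalEpsilon ProofIrrelevance.
Set Implicit Arguments. Unset Strict Implicit. Unset Printing Implicit Defensive.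

Definition asbool (P : Prop) : bool :=
  if excluded_middle_informative P then true else false.
Lemma asboolP P : reflect P (asbool P).
Proof. rewrite /asbool; case: excluded_middle_informative => h; by constructor. Qed.

Section SigmaGen.
Variable P : poly.
Lemma sigma_in_eq (F : {set P2 P}) r e f :
  {in F &, injective (@ps P)} -> f \in F -> ps f = e -> sigma_in F r e = pt (pp f).
Proof.
move=> inj fF <-; rewrite /sigma_in; case: pickP => [g /andP [gF /eqP eg]|/(_ f)].
  by rewrite (inj _ _ gF fF eg).
by rewrite fF eqxx.
Qed.
Lemma sigma_in_none (F : {set P2 P}) r e :
  (forall f, f \in F -> ps f != e) -> sigma_in F r e = r.
Proof.
move=> H; rewrite /sigma_in; case: pickP => // g /andP [gF eg].
by rewrite (negbTE (H g gF)) in eg.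
Qed.
End SigmaGen.

Definition rt (T : tree) : P0 T :=
  proj1_sig (constructive_indefinite_description _ (tree_ax T)).
Lemma rt_ok (T : tree) : @is_subtree_data T setT setT (rt T).
Proof. exact: (proj2_sig (constructive_indefinite_description _ (tree_ax T))). Qed.

Section TreeBasics.
Variable T : tree.
Definition FT : {set P2 T} := [set f | pp f \in [set: P1 T]].
Definition sg : P0 T -> P0 T := sigma_in FT (rt T).

Lemma FT_all f : f \in FT.
Proof. by rewrite inE in_setT. Qed.

Lemma ps_inj : injective (@ps T).
Proof. case: (rt_ok T) => _ [_ si] _ _ _ x y; apply: si; exact: FT_all. Qed.
Lemma pt_inj : injective (@pt T).
Proof. case: (rt_ok T) => _ [ti _] _ _ _ x y; apply: ti; exact: in_setT. Qed.

Lemma ps_neq_rt f : ps f != rt T.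
Proof.
case: (rt_ok T) => _ _ _ H _; rewrite -(H _ (in_setT _)).
by apply/negPn/imsetP; exists f; first exact: FT_all.
Qed.

Lemma notrt_ex e : e != rt T -> exists f, ps f = e.
Proof.
case: (rt_ok T) => _ _ _ H _; rewrite -(H _ (in_setT _)) => /negPn/imsetP [f _ ->].
by exists f.
Qed.

Lemma sg_s f : sg (ps f) = pt (pp f).
Proof. apply: sigma_in_eq => //; last exact: FT_all. by move=> x y _ _; apply: ps_inj. Qed.

Lemma sg_rt : sg (rt T) = rt T.
Proof. apply: sigma_in_none => f _; exact: ps_neq_rt. Qed.

Lemma reach e : exists k, iter k sg e = rt T.
Proof. case: (rt_ok T) => _ _ _ _ H; exact: H (in_setT _). Qed.

Lemma iter_rt k : iter k sg (rt T) = rt T.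
Proof. by elim: k => //= k ->; rewrite sg_rt. Qed.

Lemma iter_add a b x : iter (a + b) sg x = iter a sg (iter b sg x).
Proof. exact: iterD. Qed.

Lemma cycle_rt x k : iter k.+1 sg x = x -> x = rt T.
Proof.
move=> H; case: (reach x) => m Hm.
have P j : iter (j * k.+1) sg x = x.
  elim: j => [//|j IH]; by rewrite mulSn iter_add IH H.
have := P m; have -> : m * k.+1 = (m * k.+1 - m) + m.
  by rewrite subnK // leq_pmulr.
by rewrite iter_add Hm iter_rt => ->.
Qed.

Lemma sg_fix x : sg x = x -> x = rt T.
Proof. move=> H; apply: (@cycle_rt x 0); exact: H. Qed.

Lemma no_loop (f : P2 T) : ps f != pt (pp f).
Proof.
apply/eqP => E; have := sg_s f; rewrite -E => /sg_fix /eqP; by rewrite (negbTE (ps_neq_rt f)).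
Qed.

Definition le (x y : P0 T) : bool := asbool (exists k, iter k sg x = y).

Lemma leTP x y : reflect (exists k, iter k sg x = y) (le x y).
Proof. exact: asboolP. Qed.

Lemma le_refl x : le x x.
Proof. by apply/leTP; exists 0. Qed.

Lemma le_trans x y z : le x y -> le y z -> le x z.
Proof.
move=> /leTP [a Ha] /leTP [b Hb]; apply/leTP; exists (b + a); by rewrite iter_add Ha.
Qed.

Lemma le_rt x : le x (rt T).
Proof. apply/leTP; exact: reach. Qed.

Lemma le_antisym x y : le x y -> le y x -> x = y.
Proof.
move=> /leTP [a Ha] /leTP [b Hb].
case: a Ha => [//|a] Ha.
have : iter (b + a.+1) sg x = x by rewrite iter_add Ha Hb.
rewrite addnS => /cycle_rt Ex; rewrite Ex iter_rt in Ha; by rewrite Ex.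
Qed.

Lemma rt_le y : le (rt T) y -> y = rt T.
Proof. move=> H; apply/esym/le_antisym => //; exact: le_rt. Qed.

Lemma le_sg x : le x (sg x).
Proof. by apply/leTP; exists 1. Qed.

Lemma le_step x y : le x y -> x != y -> le (sg x) y.
Proof.
move=> /leTP [[|k] /= Hk] ne; first by rewrite Hk eqxx in ne.
apply/leTP; exists k; by rewrite -iterSr.
Qed.

Lemma le_total x y z : le x y -> le x z -> le y z || le z y.
Proof.
move=> /leTP [a Ha] /leTP [b Hb]; case: (leqP a b) => ab.
  apply/orP; left; apply/leTP; exists (b - a); by rewrite -Ha -iter_add subnK.
apply/orP; right; apply/leTP; exists (a - b); rewrite -Hb -iter_add subnK //.
exact: ltnW.
Qed.

Lemma le_down e l : le e l -> e != l -> exists z, [/\ le e z, z != rt T & sg z = l].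
Proof.
move=> /leTP [k]; elim: k e => [|k IH] e /=; first by move=> ->; rewrite eqxx.
rewrite -iterS iterSr => Hk ne.
case: (eqVneq (sg e) l) => [E|ne'].
  exists e; split => //; first exact: le_refl.
  apply/eqP => er; subst e; rewrite sg_rt in E; by rewrite E eqxx in ne.
case: (IH _ Hk ne') => z [h1 h2 h3]; exists z; split => //.
exact: le_trans (le_sg e) h1.
Qed.

End TreeBasics.

Section SubBasics.
Variable T : tree.
Implicit Types A B C : subtree T.

Lemma sub_pt_in A n : n \in st_N A -> pt n \in st_E A.
Proof. case: (st_ok A) => [[H _] _ _ _ _]; exact: H. Qed.

Lemma sub_ps_in A (f : P2 T) : pp f \in st_N A -> ps f \in st_E A.
Proof. case: (st_ok A) => [[_ H] _ _ _ _] h; apply: H; by rewrite inE. Qed.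

Lemma sub_root A : st_r A \in st_E A.
Proof. by case: (st_ok A). Qed.

Lemma sub_flag A e : e \in st_E A -> e != st_r A ->
  exists2 f : P2 T, pp f \in st_N A & ps f = e.
Proof.
case: (st_ok A) => _ _ _ H _ eE ne; move: (H _ eE); rewrite (negbTE ne).
move/negbFE/imsetP => [f]; rewrite inE => fN ->; by exists f.
Qed.

Lemma sub_rnot A (f : P2 T) : pp f \in st_N A -> ps f != st_r A.
Proof.
case: (st_ok A) => _ _ rE H _ fN; apply/eqP => E.
move: (H _ rE); rewrite eqxx -E => /negP; apply; apply/imsetP; exists f => //.
by rewrite inE.
Qed.

Lemma sub_sg A e : e \in st_E A -> e != st_r A -> sg e \in st_E A.
Proof.
move=> eE ne; case: (sub_flag eE ne) => f fN <-; rewrite sg_s; exact: sub_pt_in.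
Qed.

Lemma sub_path A e : e \in st_E A ->
  le e (st_r A) /\ forall y, le e y -> le y (st_r A) -> y \in st_E A.
Proof.
case: (st_ok A) => _ _ rE _ H eE; case: (H _ eE) => k; elim: k e eE => [|k IH] e eE /=.
  move=> ->; split; first exact: le_refl.
  by move=> y h1 h2; rewrite -(le_antisym h1 h2).
rewrite -iterS iterSr => Hk.
case: (eqVneq e (st_r A)) => [->|ne].
  split; first exact: le_refl.
  by move=> y h1 h2; rewrite -(le_antisym h1 h2).
case: (sub_flag eE ne) => f fN ef.
have Es : sigma_in [set f | pp f \in st_N A] (st_r A) e = sg e.
  rewrite -ef sg_s; apply: sigma_in_eq => //; last by rewrite inE.
  by move=> x y _ _; apply: ps_inj.
rewrite Es in Hk; have sE : sg e \in st_E A by exact: sub_sg.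
case: (IH _ sE Hk) => h1 h2; split; first exact: le_trans (le_sg e) h1.
move=> y ey yr; case: (eqVneq e y) => [<-//|ney].
apply: h2 => //; apply: le_step => //.
Qed.

Lemma sub_le_r A e : e \in st_E A -> le e (st_r A).
Proof. by case/sub_path. Qed.

Lemma sub_convex A e y : e \in st_E A -> le e y -> le y (st_r A) -> y \in st_E A.
Proof. by case/sub_path => _; apply. Qed.

Lemma leafP A l : reflect (l \in st_E A /\ l \notin (@pt T) @: st_N A) (l \in leaves A).
Proof. rewrite /leaves inE andbC; apply: andP. Qed.

Lemma leaf_notpt A l n : l \in leaves A -> n \in st_N A -> pt n != l.
Proof.
case/leafP => _ H nN; apply/eqP => E; move/negP: H; apply; apply/imsetP; by exists n.
Qed.

Lemma sub_leaf A l e : l \in leaves A -> e \in st_E A -> le e l -> e = l.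
Proof.
move=> lL eE el; apply/eqP/negPn/negP => ne.
case: (le_down el ne) => z [ez zr zl].
have lr : le l (st_r A) by apply: sub_le_r; case/leafP: lL.
have zE : z \in st_E A by apply: sub_convex eE ez (le_trans (le_trans (le_sg z) _) lr); rewrite zl le_refl.
have zne : z != st_r A.
  apply/eqP => E; have h : le (st_r A) l by rewrite -E -zl le_sg.
  have El := le_antisym lr h.
  have : sg z = z by rewrite zl El E.
  move/sg_fix => zr'; by rewrite zr' eqxx in zr.
case: (sub_flag zE zne) => f fN fz.
have := leaf_notpt lL fN; by rewrite -sg_s fz zl eqxx.
Qed.

Lemma subtree_eq A B : st_E A = st_E B -> st_N A = st_N B -> A = B.
Proof.
case: A => EA NA rA okA; case: B => EB NB rB okB /= eE eN; subst EB NB.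
have er : rA = rB.
  case: okA => _ _ rAE HA _; case: okB => _ _ _ HB _.
  apply/eqP; by rewrite -(HB _ rAE) (HA _ rAE).
subst rB; f_equal; exact: proof_irrelevance.
Qed.

Lemma mk_sub (E : {set P0 T}) (N : {set P1 T}) r :
  r \in E -> (forall n, n \in N -> pt n \in E) ->
  (forall f : P2 T, pp f \in N -> ps f \in E) ->
  (forall e, e \in E -> e != r -> exists2 f : P2 T, pp f \in N & ps f = e) ->
  (forall f : P2 T, pp f \in N -> ps f != r) -> is_subtree_data E N r.
Proof.
move=> rE tE sE fl rn; split.
- split => //; move=> f; rewrite inE; exact: sE.
- by split => x y _ _; [apply: pt_inj | apply: ps_inj].
- done.
- move=> e eE; case: (eqVneq e r) => [->|ne].
    apply/negP => /imsetP [f]; rewrite inE => fN Ef; move: (rn f fN); by rewrite Ef eqxx.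
  case: (fl _ eE ne) => f fN <-; apply/negbF/imsetP; exists f => //; by rewrite inE.
- move=> e eE; case: (reach e) => k; elim: k e eE => [|k IH] e eE /=.
    move=> er; case: (eqVneq e r) => [->|ne]; first by exists 0.
    case: (fl _ eE ne) => f _ ef; by move: (ps_neq_rt f); rewrite ef er eqxx.
  rewrite -iterS iterSr => Hk.
  case: (eqVneq e r) => [->|ne]; first by exists 0.
  case: (fl _ eE ne) => f fN ef.
  have Es : sigma_in [set f | pp f \in N] r e = sg e.
    rewrite -ef sg_s; apply: sigma_in_eq => //; last by rewrite inE.
    by move=> x y _ _; apply: ps_inj.
  have sE' : sg e \in E by rewrite -ef sg_s; apply: tE; by [].
  case: (IH _ sE' Hk) => j Hj; exists j.+1; by rewrite iterSr Es.
Qed.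

End SubBasics.

Lemma msub_eq (T : tree) (x y : msubtree T) :
  ms_tree x = ms_tree y -> ms_leaf x = ms_leaf y -> x = y.
Proof.
case: x => tx lx ox; case: y => ty ly oy /= E1 E2; subst ty ly.
f_equal; exact: bool_irrelevance.
Qed.

Section TmorBasics.
Variables (S T : tree) (phi : tmor S T).

Lemma m_leaves A : leaves (m1 phi A) = m0 phi @: leaves A.
Proof.
apply/setP => l'; apply/idP/imsetP.
  move=> H; case: (@m_cart _ _ phi A (@MSubtree T (m1 phi A) l' H) erefl).
  move=> x [[Ex Ey] _]; exists (ms_leaf x); first by rewrite -Ex; exact: ms_ok.
  by rewrite -m_leaf Ey.
case=> l lL ->; have := ms_ok (m2 phi (@MSubtree S A l lL)).
by rewrite m_leaf m_forget.
Qed.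

Lemma m_leaf_inj A : {in leaves A &, injective (m0 phi)}.
Proof.
move=> l1 l2 h1 h2 E.
pose x1 := @MSubtree S A l1 h1; pose x2 := @MSubtree S A l2 h2.
have E2 : m2 phi x1 = m2 phi x2.
  apply: msub_eq; first by rewrite (m_forget phi x1) (m_forget phi x2).
  by rewrite (m_leaf phi x1) (m_leaf phi x2).
case: (@m_cart _ _ phi A (m2 phi x1)); first by rewrite m_forget.
move=> x [_ U].
have a1 := U x1 (conj erefl erefl); have a2 := U x2 (conj erefl (esym E2)).
have : x1 = x2 by rewrite -a1 -a2.
by move=> /(congr1 (@ms_leaf S)).
Qed.

Lemma graft_sub A B C : is_graft A B C ->
  [/\ st_E (m1 phi A) \subset st_E (m1 phi C), st_N (m1 phi A) \subset st_N (m1 phi C)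
    & forall l, l \in leaves A -> st_E (m1 phi (B l)) \subset st_E (m1 phi C) /\
                                 st_N (m1 phi (B l)) \subset st_N (m1 phi C)].
Proof.
move=> G.
pose B' z := if [pick l in leaves A | m0 phi l == z] is Some l then m1 phi (B l) else m1 phi A.
have HB' : forall l, l \in leaves A -> B' (m0 phi l) = m1 phi (B l).
  move=> l lL; rewrite /B'; case: pickP => [l' /andP [l'L /eqP E]|/(_ l)].
    by rewrite (m_leaf_inj l'L lL E).
  by rewrite lL eqxx.
case: (@m_mult _ _ phi _ _ _ G _ HB') => _ HE HN _.
split; [by rewrite HE subsetUl | by rewrite HN subsetUl |].
move=> l lL; have lL' : m0 phi l \in leaves (m1 phi A) by rewrite m_leaves imset_f.
rewrite HE HN -HB'//; split; apply/subsetP => x xB; apply/setUP; right;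
  apply/bigcupP; by exists (m0 phi l).
Qed.

End TmorBasics.

Section CutUp.
Variable T : tree.
Implicit Types (A C : subtree T) (L : {set P0 T}).

Definition cutE C (L : {set P0 T}) :=
  [set e in st_E C | ~~ [exists l in L, le e l && (e != l)]].
Definition cutN C (L : {set P0 T}) :=
  [set n in st_N C | ~~ [exists l in L, le (pt n) l]].

Lemma cut_ok C L : L \subset st_E C -> is_subtree_data (cutE C L) (cutN C L) (st_r C).
Proof.
move=> LE; apply: mk_sub.
- rewrite inE sub_root /=; apply/exists_inP => [[l lL /andP [rl ne]]].
  have lr := sub_le_r (subsetP LE _ lL).
  by rewrite (le_antisym rl lr) eqxx in ne.
- move=> n; rewrite !inE => /andP [nN H]; rewrite sub_pt_in //=.
  apply: contra H => /exists_inP [l lL /andP [h _]]; apply/exists_inP; by exists l.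
- move=> f; rewrite !inE => /andP [nN H]; rewrite sub_ps_in //=.
  apply: contra H => /exists_inP [l lL /andP [h ne]]; apply/exists_inP; exists l => //.
  rewrite -sg_s; apply: le_step => //; exact: ps_neq_rt.
- move=> e; rewrite inE => /andP [eE H] ne.
  case: (sub_flag eE ne) => f fN ef; exists f => //; rewrite inE fN /=.
  apply/exists_inP => [[l lL hl]].
  have el : le e l by apply: le_trans _ hl; rewrite -ef -sg_s; exact: le_sg.
  case: (eqVneq e l) => [El|nel]; last first.
    by move/negP: H; apply; apply/exists_inP; exists l => //; rewrite el.
  subst l; have : sg e = e by apply: le_antisym; [rewrite -ef sg_s ef | exact: le_sg].
  move/sg_fix => er; by move: (ps_neq_rt f); rewrite ef er eqxx.
- move=> f; rewrite inE => /andP [fN _]; exact: sub_rnot.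
Qed.

Definition cut C L (H : L \subset st_E C) := Subtree (cut_ok H).

Definition upE C x := [set e in st_E C | le e x].
Definition upN C x := [set n in st_N C | le (pt n) x].

Lemma up_ok C x : x \in st_E C -> is_subtree_data (upE C x) (upN C x) x.
Proof.
move=> xE; apply: mk_sub.
- by rewrite inE xE le_refl.
- move=> n; rewrite !inE => /andP [nN h]; by rewrite sub_pt_in.
- move=> f; rewrite !inE => /andP [nN h]; rewrite sub_ps_in //=.
  apply: le_trans h; rewrite -sg_s; exact: le_sg.
- move=> e; rewrite inE => /andP [eE ex] ne.
  have neC : e != st_r C.
    apply/eqP => E; subst e; have := le_antisym ex (sub_le_r xE).
    by move=> E; rewrite E eqxx in ne.
  case: (sub_flag eE neC) => f fN ef; exists f => //; rewrite inE fN /=.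
  rewrite -sg_s ef; exact: le_step.
- move=> f; rewrite inE => /andP [fN h]; apply/eqP => E.
  rewrite -E -sg_s in h; have : sg (ps f) = ps f by apply: le_antisym => //; exact: le_sg.
  move/sg_fix => /eqP; by rewrite (negbTE (ps_neq_rt f)).
Qed.

Lemma upF_ok C x : is_subtree_data (if x \in st_E C then upE C x else st_E C)
  (if x \in st_E C then upN C x else st_N C) (if x \in st_E C then x else st_r C).
Proof. case: ifP => h; [exact: up_ok h | exact: st_ok]. Qed.

Definition upF C x : subtree T := Subtree (upF_ok C x).

Lemma upF_spec C x : x \in st_E C ->
  [/\ st_E (upF C x) = upE C x, st_N (upF C x) = upN C x & st_r (upF C x) = x].
Proof. by move=> h; rewrite /= h. Qed.

Definition antichain (L : {set P0 T}) := forall l1 l2, l1 \in L -> l2 \in L -> le l1 l2 -> l1 = l2.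

Lemma cut_leaves C L (H : L \subset st_E C) : antichain L -> L \subset leaves (cut H).
Proof.
move=> AC; apply/subsetP => l lL; apply/leafP; split.
  rewrite /= inE (subsetP H _ lL) /=; apply/exists_inP => [[l' l'L /andP [h ne]]].
  by rewrite (AC _ _ lL l'L h) eqxx in ne.
apply/imsetP => [[n]]; rewrite /= inE => /andP [_ /exists_inP Hn] E; apply: Hn.
by exists l => //; rewrite -E le_refl.
Qed.

Lemma graft1 C L (H : L \subset st_E C) : antichain L -> is_graft (cut H) (upF C) C.
Proof.
move=> AC; split => //.
- move=> l /leafP [lE _].
  have {lE}lE : l \in st_E C by move: lE; rewrite /= inE => /andP [].
  by case: (upF_spec lE).
- apply/setP => e; rewrite inE; apply/idP/idP.
    move=> eE; case: (boolP [exists l in L, le e l && (e != l)]).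
      case/exists_inP => l lL /andP [el ne]; apply/orP; right.
      have lE := subsetP H _ lL.
      apply/bigcupP; exists l; first exact: (subsetP (cut_leaves H AC)).
      by case: (upF_spec lE) => -> _ _; rewrite inE eE el.
    by move=> h; rewrite /= inE eE h.
  case/orP; first by rewrite /= inE => /andP [].
  case/bigcupP => l /leafP [lE _].
  have {lE}lE : l \in st_E C by move: lE; rewrite /= inE => /andP [].
  by case: (upF_spec lE) => -> _ _; rewrite inE => /andP [].
- apply/setP => n; rewrite inE; apply/idP/idP.
    move=> nN; case: (boolP [exists l in L, le (pt n) l]).
      case/exists_inP => l lL el; apply/orP; right.
      have lE := subsetP H _ lL.
      apply/bigcupP; exists l; first exact: (subsetP (cut_leaves H AC)).
      by case: (upF_spec lE) => _ -> _; rewrite inE nN el.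
    by move=> h; rewrite /= inE nN h.
  case/orP; first by rewrite /= inE => /andP [].
  case/bigcupP => l /leafP [lE _].
  have {lE}lE : l \in st_E C by move: lE; rewrite /= inE => /andP [].
  by case: (upF_spec lE) => _ -> _; rewrite inE => /andP [].
Qed.

End CutUp.

Section Claim.
Variable T : tree.
Implicit Types A C : subtree T.

Lemma in_sub_claim A C : st_E A \subset st_E C -> st_N A \subset st_N C ->
  forall e, e \in st_E C -> le e (st_r A) ->
  (forall l, l \in leaves A -> le e l -> e = l) -> e \in st_E A.
Proof.
move=> sE sN e eE /leTP [k Hk]; elim: k e eE Hk => [|k IH] e eE /=.
  by move=> -> _; exact: sub_root.
rewrite -iterS iterSr => Hk Hl.
case: (eqVneq e (st_r A)) => [->|ne]; first exact: sub_root.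
have rAC : st_r A \in st_E C := subsetP sE _ (sub_root A).
have er : le e (st_r A) by apply/leTP; exists k.+1; rewrite iterSr.
have neC : e != st_r C.
  apply/eqP => E; have := le_antisym er; rewrite E => /(_ (sub_le_r rAC)) E'.
  by rewrite E E' eqxx in ne.
have sgE : sg e \in st_E C by exact: sub_sg.
have sgA : sg e \in st_E A.
  apply: IH => // l lL h; have el : le e l := le_trans (le_sg e) h.
  have El := Hl l lL el; subst l.
  by apply: le_antisym => //; exact: le_sg.
case: (sub_flag eE neC) => f fN ef.
case: (boolP (sg e \in leaves A)) => [sL|sNL].
  have := Hl _ sL (le_sg e) => /esym/sg_fix er'.
  by move: (ps_neq_rt f); rewrite ef er' eqxx.
have : sg e \in (@pt T) @: st_N A.
  by apply: contraR sNL => h; apply/leafP; split.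
case/imsetP => n nN E; rewrite -ef sg_s in E; move/pt_inj: E => E.
rewrite -ef; apply: sub_ps_in; by rewrite E.
Qed.

End Claim.

Section Mono.
Variables (S T : tree) (phi : tmor S T).

Lemma m_mono (A C : subtree S) : st_E A \subset st_E C -> st_N A \subset st_N C ->
  st_E (m1 phi A) \subset st_E (m1 phi C) /\ st_N (m1 phi A) \subset st_N (m1 phi C).
Proof.
move=> sE sN.
have rAC : st_r A \in st_E C := subsetP sE _ (sub_root A).
have H1 : [set st_r A] \subset st_E C by rewrite sub1set.
have AC1 : antichain [set st_r A] by move=> l1 l2; rewrite !inE => /eqP -> /eqP ->.
have G1 := graft1 H1 AC1.
have rl : st_r A \in leaves (cut H1) := subsetP (cut_leaves H1 AC1) _ (set11 _).
case: (graft_sub phi G1) => _ _ /(_ _ rl) [sE1 sN1].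
case: (upF_spec rAC) => UE UN Ur.
have H2 : leaves A \subset st_E (upF C (st_r A)).
  apply/subsetP => l /leafP [lE _]; rewrite UE inE (subsetP sE _ lE) /=.
  exact: sub_le_r.
have AC2 : antichain (leaves A).
  move=> l1 l2 h1 h2 le12; apply: (sub_leaf h2) => //; by case/leafP: h1.
have G2 := graft1 H2 AC2.
case: (graft_sub phi G2) => sE2 sN2 _.
have EQ : cut H2 = A.
  apply: subtree_eq => /=.
    apply/setP => e; rewrite inE UE inE; apply/idP/idP.
      case/andP => /andP [eE er] h; apply: (in_sub_claim sE sN) => // l lL el.
      apply/eqP/negPn/negP => ne; move/negP: h; apply; apply/exists_inP; exists l => //.
      by rewrite el.
    move=> eA; rewrite (subsetP sE _ eA) (sub_le_r eA) /=.
    apply/exists_inP => [[l lL /andP [el ne]]].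
    by rewrite (sub_leaf lL eA el) eqxx in ne.
  apply/setP => n; rewrite inE UN inE; apply/idP/idP.
    case/andP => /andP [nN nr] h.
    have tA : pt n \in st_E A.
      apply: (in_sub_claim sE sN) => //; first exact: sub_pt_in.
      move=> l lL el; move/negP: h; case; apply/exists_inP; by exists l.
    have : pt n \in (@pt S) @: st_N A.
      apply: contraR h => h'; apply/exists_inP; exists (pt n); last exact: le_refl.
      by apply/leafP; split.
    by case/imsetP => n' n'N /pt_inj ->.
  move=> nA; rewrite (subsetP sN _ nA) (sub_le_r (sub_pt_in nA)) /=.
  apply/exists_inP => [[l lL el]].
  have := sub_leaf lL (sub_pt_in nA) el => E.
  by move: (leaf_notpt lL nA); rewrite E eqxx.
rewrite EQ in sE2 sN2; split; [exact: subset_trans sE2 sE1 | exact: subset_trans sN2 sN1].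
Qed.

End Mono.

Section Units.
Variable T : tree.
Lemma unit_ok (e : P0 T) : is_subtree_data [set e] (set0 : {set P1 T}) e.
Proof.
apply: mk_sub; first by rewrite set11.
- by move=> n; rewrite in_set0.
- by move=> f; rewrite in_set0.
- by move=> x; rewrite inE => /eqP ->; rewrite eqxx.
- by move=> f; rewrite in_set0.
Qed.
Definition unitS (e : P0 T) : subtree T := Subtree (unit_ok e).
Definition maxS : subtree T := Subtree (rt_ok T).
Lemma max_eq A : is_max A -> A = maxS.
Proof. by case=> h1 h2; apply: subtree_eq. Qed.
Lemma maxS_max : is_max maxS. Proof. by []. Qed.
Lemma sub_max (A : subtree T) : st_E A \subset st_E maxS /\ st_N A \subset st_N maxS.
Proof. by split; apply/subsetP => x; rewrite in_setT. Qed.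
End Units.

Lemma m0_in S T (phi : tmor S T) (A : subtree S) e :
  e \in st_E A -> m0 phi e \in st_E (m1 phi A).
Proof.
move=> eA.
have [h1 h2] : st_E (unitS e) \subset st_E A /\ st_N (unitS e) \subset st_N A.
  by split; apply/subsetP => x; rewrite /= inE // => /eqP ->.
case: (m_mono phi h1 h2) => sE _; apply: (subsetP sE).
have [-> _] := m_unit phi (e := e) (A := unitS e) (conj erefl erefl).
by rewrite set11.
Qed.

Lemma img_bigcup (aT rT iT jT : finType) (f : aT -> rT) (X : {set aT}) (I : {set iT})
  (F : iT -> {set aT}) (g : iT -> jT) (G : jT -> {set rT}) :
  (forall i, i \in I -> G (g i) = f @: F i) ->
  f @: (X :|: \bigcup_(i in I) F i) = f @: X :|: \bigcup_(j in g @: I) G j.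
Proof.
move=> HG; apply/setP => y; apply/imsetP/setUP.
  case=> x /setUP [xX ->|/bigcupP [i iI xF] ->]; first by left; apply: imset_f.
  right; apply/bigcupP; exists (g i); first exact: imset_f.
  by rewrite HG // imset_f.
case=> [/imsetP [x xX ->]|/bigcupP [j /imsetP [i iI ->]]].
  by exists x => //; rewrite inE xX.
rewrite HG // => /imsetP [x xF ->]; exists x => //; apply/setUP; right.
by apply/bigcupP; exists i.
Qed.

Section TembInj.
Variables (S T : tree) (a0 : P0 S -> P0 T) (a1 : P1 S -> P1 T) (a2 : P2 S -> P2 T).
Hypothesis Ht : temb a0 a1 a2.

Lemma temb_sg x : x != rt S -> a0 (sg x) = sg (a0 x).
Proof.
case: Ht => hs hp ht _ /notrt_ex [f <-].
by rewrite sg_s -hs sg_s hp ht.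
Qed.

Lemma temb_nrt x : x != rt S -> a0 x != rt T.
Proof. case: Ht => hs _ _ _ /notrt_ex [f <-]; rewrite -hs; exact: ps_neq_rt. Qed.

Lemma temb_le u v : le u v -> le (a0 u) (a0 v).
Proof.
move/leTP => [k]; elim: k u => [|k IH] u /=; first by move=> ->; exact: le_refl.
rewrite -iterS iterSr => Hk.
case: (eqVneq u (rt S)) => [ur|ne].
  by rewrite ur sg_rt iter_rt in Hk; rewrite ur -Hk le_refl.
apply: le_trans (le_sg (a0 u)) _; rewrite -temb_sg //; exact: IH.
Qed.

Lemma temb_rt_case y : a0 (rt S) = a0 y -> y = rt S.
Proof.
move=> E; apply/eqP/negPn/negP => ne.
have h := temb_le (le_rt (sg y)); rewrite temb_sg // E in h.
have : sg (a0 y) = a0 y by apply: le_antisym => //; exact: le_sg.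
move/sg_fix => /eqP; by rewrite (negbTE (temb_nrt ne)).
Qed.

Lemma temb_inj0 : injective a0.
Proof.
move=> x y; case: (reach x) => k; elim: k x y => [|k IH] x y /=.
  by move=> -> /temb_rt_case ->.
rewrite -iterS iterSr => Hk E.
case: (eqVneq x (rt S)) => [xr|nx]; first by rewrite xr in E *; rewrite (temb_rt_case E).
case: (eqVneq y (rt S)) => [yr|ny]; first by rewrite yr in E *; rewrite (temb_rt_case (esym E)).
have E' : sg x = sg y by apply: IH Hk _; rewrite !temb_sg // E.
case/notrt_ex: nx => f ef; case/notrt_ex: ny => g eg; subst x y.
rewrite !sg_s in E'; move/pt_inj: E' => E'.
case: Ht => hs hp _ hu.
have E2 : a2 f = a2 g by apply: ps_inj; rewrite !hs.
case: (hu (pp f) (a2 f) (hp f)) => f' [_ U].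
have := U f (conj erefl erefl); have := U g (conj (esym E') (esym E2)).
by move=> <- <-.
Qed.

Lemma temb_inj1 : injective a1.
Proof.
case: Ht => _ _ ht _ n m E; apply: pt_inj; apply: temb_inj0; by rewrite -!ht E.
Qed.

Lemma temb_inj2 : injective a2.
Proof. case: Ht => hs _ _ _ f g E; apply: ps_inj; apply: temb_inj0; by rewrite -!hs E. Qed.

End TembInj.

Section Img.
Variables (S T : tree) (a0 : P0 S -> P0 T) (a1 : P1 S -> P1 T) (a2 : P2 S -> P2 T).
Hypothesis Ht : temb a0 a1 a2.
Let i0 := temb_inj0 Ht.
Let i1 := temb_inj1 Ht.

Lemma img_ok (A : subtree S) :
  is_subtree_data (a0 @: st_E A) (a1 @: st_N A) (a0 (st_r A)).
Proof.
case: Ht => hs hp ht hu.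
apply: (@mk_sub T (a0 @: st_E A) (a1 @: st_N A) (a0 (st_r A))).
- by rewrite imset_f // sub_root.
- move=> n /imsetP [m mN ->]; by rewrite ht imset_f // sub_pt_in.
- move=> g /imsetP [m mN E]; case: (hu m g E) => f [[pf <-] _].
  by rewrite hs imset_f // sub_ps_in // pf.
- move=> e /imsetP [x xE ->] ne.
  have nx : x != st_r A by apply: contra ne => /eqP ->.
  case: (sub_flag xE nx) => f fN <-; exists (a2 f); last by rewrite hs.
  by rewrite hp imset_f.
- move=> g /imsetP [m mN E]; case: (hu m g E) => f [[pf <-] _].
  rewrite hs; apply: contraTneq (sub_rnot (A := A) (f := f) _) => [/i0 ->|]; first by rewrite eqxx.
  by rewrite pf.
Qed.

Definition imgS (A : subtree S) : subtree T := Subtree (img_ok A).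

Lemma img_leaves A : leaves (imgS A) = a0 @: leaves A.
Proof.
case: Ht => hs hp ht hu.
apply/setP => l; apply/idP/idP.
  case/leafP => /imsetP [x xE ->] H; apply: imset_f; apply/leafP; split => //.
  apply: contra H => /imsetP [n nN ->]; by rewrite -ht imset_f // imset_f.
case/imsetP => x /leafP [xE H] ->; apply/leafP; split; first exact: imset_f.
apply: contra H => /imsetP [n /imsetP [m mN ->]]; rewrite ht => /i0 ->.
exact: imset_f.
Qed.

Lemma img_mleaf (x : msubtree S) : a0 (ms_leaf x) \in leaves (imgS (ms_tree x)).
Proof. by rewrite img_leaves imset_f // ms_ok. Qed.

Definition img2 (x : msubtree S) : msubtree T := MSubtree (img_mleaf x).

Lemma img_eq (A1 A2 : subtree S) : imgS A1 = imgS A2 -> A1 = A2.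
Proof.
move=> E; apply: subtree_eq.
  apply: (imset_inj i0); by rewrite -[RHS]/(st_E (imgS A2)) -E.
apply: (imset_inj i1); by rewrite -[RHS]/(st_N (imgS A2)) -E.
Qed.

Definition freeOf : tmor S T.
Proof.
refine (@TMor S T a0 imgS img2 (fun _ => erefl) (fun _ => erefl) (fun _ => erefl) _ _ _).
- move=> A y Ey.
  have : ms_leaf y \in leaves (imgS A) by rewrite -Ey; exact: ms_ok.
  rewrite img_leaves => /imsetP [l lL El].
  exists (MSubtree lL); split.
    split => //; apply: msub_eq => /=; [by rewrite Ey | by rewrite El].
  move=> x' [Ex' Ey']; apply: msub_eq => //=; apply: i0.
  by rewrite -El -Ey'.
- move=> e A [h1 h2]; split; by rewrite /= ?h1 ?h2 ?imset_set1 ?imset0.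
- move=> A B C [hr hE hN hR] B' HB'; split.
  + move=> l; rewrite img_leaves => /imsetP [x xL ->]; rewrite HB' //= hr //.
  + rewrite /= hE (img_bigcup _ (g := a0) (G := fun z => st_E (B' z))) ?img_leaves //.
    by move=> i iL; rewrite HB'.
  + rewrite /= hN (img_bigcup _ (g := a0) (G := fun z => st_N (B' z))) ?img_leaves //.
    by move=> i iL; rewrite HB'.
  + by rewrite /= hR.
Defined.

Lemma freeOf_free : free_mor freeOf.
Proof. exists a0, a1, a2; split => //; split => //. Qed.

End Img.

Section Restrict.
Variables (Cc Dd : tree) (mm : tmor Cc Dd).
Variables (a0 : P0 Cc -> P0 Dd) (a1 : P1 Cc -> P1 Dd) (a2 : P2 Cc -> P2 Dd).
Hypothesis Ht : temb a0 a1 a2.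
Hypothesis Hm0 : forall x, m0 mm x = a0 x.
Hypothesis HmE : forall A, st_E (m1 mm A) = a0 @: st_E A /\ st_N (m1 mm A) = a1 @: st_N A.
Let i0 := temb_inj0 Ht.
Let i1 := temb_inj1 Ht.

Definition ainv (z : P0 Dd) : P0 Cc := odflt (rt Cc) [pick x | a0 x == z].
Lemma ainvK z : (exists x, a0 x = z) -> a0 (ainv z) = z.
Proof.
case=> x Ex; rewrite /ainv; case: pickP => [y /eqP //|/(_ x)]; by rewrite Ex eqxx.
Qed.
Lemma ainv_a0 x : ainv (a0 x) = x.
Proof. apply: i0; apply: ainvK; by exists x. Qed.

Lemma mm_inj1 A1 A2 : m1 mm A1 = m1 mm A2 -> A1 = A2.
Proof.
move=> E; have [e1 n1] := HmE A1; have [e2 n2] := HmE A2.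
apply: subtree_eq; [apply: (imset_inj i0) | apply: (imset_inj i1)];
  by rewrite -?e1 -?e2 -?n1 -?n2 E.
Qed.

Lemma mm_inj2 x1 x2 : m2 mm x1 = m2 mm x2 -> x1 = x2.
Proof.
move=> E; apply: msub_eq.
  apply: mm_inj1; by rewrite -!(m_forget mm) E.
apply: i0; by rewrite -!Hm0 -!(m_leaf mm) E.
Qed.

Lemma mm_root A : st_r (m1 mm A) = a0 (st_r A).
Proof. by rewrite m_root Hm0. Qed.

Lemma mm_leaves A : leaves (m1 mm A) = a0 @: leaves A.
Proof. rewrite m_leaves; apply: eq_imset => x; exact: Hm0. Qed.

Section Pre.
Variable (D' : subtree Dd).
Hypothesis hE : forall e, e \in st_E D' -> exists x, a0 x = e.
Hypothesis hN : forall n, n \in st_N D' -> exists m, a1 m = n.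

Lemma pre_ok : is_subtree_data (a0 @^-1: st_E D') (a1 @^-1: st_N D') (ainv (st_r D')).
Proof.
case: Ht => hs hp ht hu.
have ar : a0 (ainv (st_r D')) = st_r D' by apply: ainvK; apply: hE; exact: sub_root.
apply: (@mk_sub Cc (a0 @^-1: st_E D') (a1 @^-1: st_N D') (ainv (st_r D'))).
- by rewrite inE ar sub_root.
- by move=> n; rewrite !inE -ht; exact: sub_pt_in.
- move=> f; rewrite !inE -hs -hp; exact: sub_ps_in.
- move=> e; rewrite inE => eE ne.
  have ne' : a0 e != st_r D' by apply: contra ne => /eqP <-; rewrite ainv_a0.
  case: (sub_flag eE ne') => g gN Eg.
  case: (hN gN) => m Em; case: (hu m g (esym Em)) => f [[pf Ef] _].
  exists f; first by rewrite inE pf Em.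
  by apply: i0; rewrite -hs Ef.
- move=> f; rewrite inE => fN; apply/eqP => E.
  have := sub_rnot (A := D') (f := a2 f); rewrite hp fN hs E ar eqxx.
  by move=> /(_ isT).
Qed.

Definition pre : subtree Cc := Subtree pre_ok.

Lemma pre_img : m1 mm pre = D'.
Proof.
have [e1 n1] := HmE pre; apply: subtree_eq; rewrite ?e1 ?n1 /=.
  apply/setP => e; apply/imsetP/idP => [[x]|eE]; first by rewrite inE => h ->.
  case: (hE eE) => x Ex; exists x => //; by rewrite inE Ex.
apply/setP => e; apply/imsetP/idP => [[x]|eE]; first by rewrite inE => h ->.
case: (hN eE) => x Ex; exists x => //; by rewrite inE Ex.
Qed.
End Pre.

Lemma graft_reflect X B' Y G :
  is_graft (m1 mm X) G (m1 mm Y) ->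
  (forall l, l \in leaves X -> G (a0 l) = m1 mm (B' l)) -> is_graft X B' Y.
Proof.
move=> [hr hE hN hR] HG; split.
- move=> l lL; apply: i0; rewrite -mm_root -HG // hr // mm_leaves imset_f //.
- apply: (imset_inj i0); rewrite -(proj1 (HmE Y)) hE.
  rewrite (img_bigcup _ (g := a0) (G := fun z => st_E (G z))); first by rewrite mm_leaves (proj1 (HmE X)).
  by move=> i iL; rewrite HG // (proj1 (HmE _)).
- apply: (imset_inj i1); rewrite -(proj2 (HmE Y)) hN.
  rewrite (img_bigcup _ (g := a0) (G := fun z => st_N (G z))); first by rewrite mm_leaves (proj2 (HmE X)).
  by move=> i iL; rewrite HG // (proj2 (HmE _)).
- by apply: i0; rewrite -!mm_root hR.
Qed.

Variables (Bb : tree) (v : tmor Bb Dd).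
Hypothesis HvE : forall A e, e \in st_E (m1 v A) -> exists x, a0 x = e.
Hypothesis HvN : forall A n, n \in st_N (m1 v A) -> exists m, a1 m = n.

Definition d0 (y : P0 Bb) : P0 Cc := ainv (m0 v y).
Definition d1 (A : subtree Bb) : subtree Cc := pre (@HvE A) (@HvN A).

Lemma mm_d1 A : m1 mm (d1 A) = m1 v A.
Proof. exact: pre_img. Qed.

Lemma a0_d0 y : a0 (d0 y) = m0 v y.
Proof.
apply: ainvK; apply: (@HvE (unitS y)).
have [-> _] := m_unit v (e := y) (A := unitS y) (conj erefl erefl).
exact: set11.
Qed.

Lemma d_leaf (x : msubtree Bb) : d0 (ms_leaf x) \in leaves (d1 (ms_tree x)).
Proof.
have := m_leaves mm (d1 (ms_tree x)); rewrite mm_d1 m_leaves => E.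
have : m0 v (ms_leaf x) \in m0 v @: leaves (ms_tree x) by rewrite imset_f // ms_ok.
rewrite E => /imsetP [z zL]; rewrite Hm0 /d0 => ->; by rewrite ainv_a0.
Qed.

Definition d2 (x : msubtree Bb) : msubtree Cc := MSubtree (d_leaf x).

Definition dmor : tmor Bb Cc.
Proof.
refine (@TMor Bb Cc d0 d1 d2 (fun _ => erefl) (fun _ => erefl) _ _ _ _).
- move=> A; apply: i0; by rewrite -mm_root mm_d1 a0_d0 m_root.
- move=> A y Ey.
  case: (@m_cart _ _ v A (m2 mm y)); first by rewrite m_forget Ey mm_d1.
  move=> x [[Ex Ey'] U]; exists x; split.
    split => //; apply: msub_eq => /=; first by rewrite Ex.
    apply: i0; by rewrite a0_d0 -(m_leaf v) Ey' m_leaf Hm0.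
  move=> x' [Ex' Ey'']; apply: U; split => //; apply: msub_eq.
    by rewrite m_forget m_forget Ex' Ey mm_d1.
  by rewrite m_leaf m_leaf -a0_d0 -Hm0 -Ey''.
- move=> e A hu; have [h1 h2] := m_unit v hu.
  have [e1 n1] := HmE (d1 A); rewrite mm_d1 in e1 n1.
  split.
    apply: (imset_inj i0); by rewrite -e1 h1 imset_set1 a0_d0.
  apply: (imset_inj i1); by rewrite -n1 h2 imset0.
- move=> A B C G B' HB'.
  pose B'' z := m1 mm (B' (ainv z)).
  have HB'' : forall l, l \in leaves A -> B'' (m0 v l) = m1 v (B l).
    by move=> l lL; rewrite /B'' -(mm_d1 (B l)) -HB'.
  have G' := @m_mult _ _ v _ _ _ G _ HB''; rewrite -!mm_d1 in G'.
  apply: (graft_reflect G') => l lL; by rewrite /B'' ainv_a0.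
Defined.

Lemma dmor_comp : is_comp dmor mm v.
Proof.
split.
- move=> x; rewrite Hm0; exact/esym/a0_d0.
- move=> A; exact/esym/mm_d1.
- move=> x; apply/esym/msub_eq.
    rewrite (m_forget mm) (m_forget dmor) (m_forget v); exact: mm_d1.
  rewrite (m_leaf mm) (m_leaf dmor) (m_leaf v) Hm0; exact: a0_d0.
Qed.

End Restrict.

Lemma free_unique (X Cc Dd : tree) (mm : tmor Cc Dd) (v : tmor X Dd) (d d' : tmor X Cc) :
  free_mor mm -> is_comp d mm v -> is_comp d' mm v -> meq d d'.
Proof.
case=> a0 [a1 [a2 [Ht [Hm0 HmE]]]] [c0 c1 c2] [c0' c1' c2'].
split => x.
- apply: (temb_inj0 Ht); by rewrite -!Hm0 -c0 -c0'.
- apply: (mm_inj1 Ht HmE); by rewrite -c1 -c1'.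
- apply: (mm_inj2 Ht Hm0 HmE); by rewrite -c2 -c2'.
Qed.

Section XTree.
Variables (T : tree) (K : subtree T).

Definition X0 : finType := {x : P0 T | x \in st_E K}.
Definition X1 : finType := {n : P1 T | n \in st_N K}.
Definition X2 : finType := {f : P2 T | pp f \in st_N K}.

Definition xps (f : X2) : X0 := exist _ (ps (val f)) (sub_ps_in (valP f)).
Definition xpp (f : X2) : X1 := exist _ (pp (val f)) (valP f).
Definition xpt (n : X1) : X0 := exist _ (pt (val n)) (sub_pt_in (valP n)).

Definition Xpoly : poly := @Poly X0 X1 X2 xps xpp xpt.

Definition xr : X0 := exist _ (st_r K) (sub_root K).

Let FK := [set f : P2 T | pp f \in st_N K].
Let FX := [set f : P2 Xpoly | pp f \in [set: P1 Xpoly]].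

Lemma xsig (x : X0) :
  val (sigma_in FX xr x) = sigma_in FK (st_r K) (val x).
Proof.
case: (boolP [exists f in FK, ps f == val x]).
  case/exists_inP => f fK /eqP ef.
  have fN : pp f \in st_N K by rewrite inE in fK.
  pose f' : X2 := exist _ f fN.
  have ex : xps f' = x by apply: val_inj; rewrite /= ef.
  rewrite (@sigma_in_eq Xpoly FX xr x f') //; last by rewrite inE in_setT.
    rewrite (@sigma_in_eq T FK (st_r K) (val x) f) //.
    by move=> a b _ _; apply: ps_inj.
  move=> a b _ _ E; apply: val_inj; apply: ps_inj.
  by move: (congr1 val E).
move=> H.
rewrite (@sigma_in_none T FK); last first.
  by move=> f fK; apply: contra H => /eqP E; apply/exists_inP; exists f => //; rewrite E.
rewrite (@sigma_in_none Xpoly FX) //.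
move=> f _; apply: contra H => /eqP E; apply/exists_inP; exists (val f).
  by rewrite inE (valP f).
by rewrite -E.
Qed.

Lemma xiter k (x : X0) :
  val (iter k (sigma_in FX xr) x) = iter k (sigma_in FK (st_r K)) (val x).
Proof. elim: k => //= k IH; rewrite xsig; congr (sigma_in _ _ _); exact: IH. Qed.

Lemma Xax : is_tree Xpoly.
Proof.
case: (st_ok K) => [[ctE csE] [cit cis] crE c4 c5].
exists xr; split.
- by split => *; rewrite in_setT.
- split => a b _ _ E.
    apply: val_inj; apply: (cit _ _ (valP a) (valP b)); by move: (congr1 val E).
  apply: val_inj; apply: ps_inj; by move: (congr1 val E).
- by rewrite in_setT.
- move=> e _.
  have -> : (e == xr) = (val e == st_r K) by [].
  rewrite -(c4 _ (valP e)); congr negb; apply/imsetP/imsetP.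
    case=> f _ ->; exists (val f) => //; by rewrite inE (valP f).
  case=> f; rewrite inE => fN E; exists (exist _ f fN); first by rewrite inE in_setT.
  by apply: val_inj; rewrite /= E.
- move=> e _; case: (c5 _ (valP e)) => k Hk; exists k; apply: val_inj.
  by rewrite xiter Hk.
Qed.

Definition Xtree : tree := Tree Xax.

Definition x0v (x : P0 Xtree) : P0 T := val (x : X0).
Definition x1v (x : P1 Xtree) : P1 T := val (x : X1).
Definition x2v (x : P2 Xtree) : P2 T := val (x : X2).

Lemma Xtemb : temb x0v x1v x2v.
Proof.
split => //.
move=> n g E; have gN : pp g \in st_N K by rewrite E (valP (n : X1)).
exists (exist _ g gN : X2); split; first by split => //; apply: val_inj.
by move=> f [_ Ef]; apply: val_inj; rewrite /= -Ef.
Qed.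

Definition Xinc : tmor Xtree T := freeOf Xtemb.

Lemma Xinc_max : m1 Xinc (maxS Xtree) = K.
Proof.
apply: subtree_eq => /=; apply/setP => x; apply/imsetP/idP => [[y _ ->]|h].
- by case: y.
- by exists (exist _ x h : X0); rewrite ?in_setT.
- by case: y.
- by exists (exist _ x h : X1); rewrite ?in_setT.
Qed.

End XTree.

Section Corolla.
Variable T : tree.
Definition corE (n : P1 T) : {set P0 T} := pt n |: [set ps f | f in [set f : P2 T | pp f == n]].
Lemma cor_ok n : is_subtree_data (corE n) [set n] (pt n).
Proof.
apply: (@mk_sub T (corE n) [set n] (pt n)).
- by rewrite setU11.
- by move=> m; rewrite inE => /eqP ->; rewrite setU11.
- move=> f; rewrite inE => fn; apply/setU1P; right; apply: imset_f; by rewrite inE.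
- move=> e; case/setU1P => [->|/imsetP [f]]; first by rewrite eqxx.
  rewrite inE => fn -> _; exists f => //; by rewrite inE.
- move=> f; rewrite inE => /eqP <-; exact: no_loop.
Qed.
Definition corS n : subtree T := Subtree (cor_ok n).

Lemma N_char (A : subtree T) n : (n \in st_N A) = (pt n \in st_E A) && (pt n \notin leaves A).
Proof.
apply/idP/andP.
  move=> nN; split; first exact: sub_pt_in.
  apply/negP => /leafP [_ H]; move/negP: H; apply; exact: imset_f.
case=> h1 h2; have : pt n \in (@pt T) @: st_N A.
  by apply: contraR h2 => h; apply/leafP.
by case/imsetP => m mN /pt_inj ->.
Qed.
End Corolla.

Lemma nonleaf_pt (T : tree) (A : subtree T) y : y \in st_E A -> y \notin leaves A ->
  exists2 n, n \in st_N A & pt n = y.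
Proof.
move=> yE yL; have : y \in (@pt T) @: st_N A by apply: contraR yL => h; apply/leafP.
case/imsetP => n nN ->; by exists n.
Qed.

Section Iso.
Variables (S T : tree) (f : tmor S T) (g : tmor T S).
Hypothesis gf : forall x, m0 g (m0 f x) = x.
Hypothesis fg : forall y, m0 f (m0 g y) = y.
Hypothesis gf1 : forall A, m1 g (m1 f A) = A.
#[local] Set Default Proof Using "All".

Lemma f0_inj : injective (m0 f).
Proof. by move=> x y E; rewrite -(gf x) E gf. Qed.

Lemma iso_E A : st_E (m1 f A) = m0 f @: st_E A.
Proof.
apply/setP => y; apply/idP/imsetP.
  move=> yE; exists (m0 g y); last by rewrite fg.
  by have := m0_in g yE; rewrite gf1.
by case=> x xE ->; exact: m0_in.
Qed.

Lemma iso_node n : exists n', pt n' = m0 f (pt n).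
Proof.
pose M := maxS S.
have yE : m0 f (pt n) \in st_E (m1 f M) by apply: m0_in; rewrite in_setT.
have yL : m0 f (pt n) \notin leaves (m1 f M).
  rewrite m_leaves; apply/imsetP => [[l lL /f0_inj E]].
  by move: (leaf_notpt lL (in_setT n)); rewrite E eqxx.
case: (nonleaf_pt yE yL) => n' _ E; by exists n'.
Qed.

Definition ia1 n := proj1_sig (constructive_indefinite_description _ (iso_node n)).
Lemma ia1_spec n : pt (ia1 n) = m0 f (pt n).
Proof. exact: (proj2_sig (constructive_indefinite_description _ (iso_node n))). Qed.

Lemma iso_N A : st_N (m1 f A) = ia1 @: st_N A.
Proof.
apply/setP => n'; rewrite N_char iso_E m_leaves; apply/andP/imsetP.
  case=> /imsetP [x xE Ex] H.
  have xL : x \notin leaves A by apply: contra H => h; rewrite Ex imset_f.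
  case: (nonleaf_pt xE xL) => n nN En; exists n => //.
  by apply: pt_inj; rewrite ia1_spec Ex En.
case=> n nN ->; rewrite ia1_spec; split; first by rewrite imset_f // sub_pt_in.
apply/imsetP => [[l lL /f0_inj E]].
by move: (leaf_notpt lL nN); rewrite E eqxx.
Qed.

Lemma iso_flag (x : P2 S) : exists y : P2 T, pp y = ia1 (pp x) /\ ps y = m0 f (ps x).
Proof.
pose C := corS (pp x).
have xE : ps x \in st_E C by apply/setU1P; right; apply: imset_f; rewrite inE.
have yE := m0_in f xE.
have ne : m0 f (ps x) != st_r (m1 f C).
  rewrite m_root; apply: contra (no_loop x) => /eqP /f0_inj ->; by [].
case: (sub_flag yE ne) => y; rewrite iso_N imset_set1 inE => /eqP E1 E2.
by exists y.
Qed.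

Definition ia2 x := proj1_sig (constructive_indefinite_description _ (iso_flag x)).
Lemma ia2_spec x : pp (ia2 x) = ia1 (pp x) /\ ps (ia2 x) = m0 f (ps x).
Proof. exact: (proj2_sig (constructive_indefinite_description _ (iso_flag x))). Qed.

Lemma iso_temb : temb (m0 f) ia1 ia2.
Proof.
split; [by move=> x; case: (ia2_spec x) | by move=> x; case: (ia2_spec x) | exact: ia1_spec |].
move=> n y E.
pose C := corS n.
have yN : pp y \in st_N (m1 f C) by rewrite iso_N imset_set1 inE E.
have := sub_ps_in yN; rewrite iso_E => /imsetP [z]; case/setU1P => [->|].
  move=> Ez; move: (no_loop y); by rewrite Ez E ia1_spec eqxx.
case/imsetP => x; rewrite inE => /eqP px -> Ez.
exists x; split.
  split => //; apply: ps_inj; by case: (ia2_spec x) => _ ->.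
move=> x' [px' Ex']; apply: ps_inj; apply: f0_inj.
by case: (ia2_spec x') => _ <-; rewrite Ex' Ez.
Qed.

Lemma iso_free : free_mor f.
Proof.
exists (m0 f), ia1, ia2; split; first exact: iso_temb.
split => // A; split; [exact: iso_E | exact: iso_N].
Qed.

End Iso.

Lemma iso_free_mor S T (f : tmor S T) : is_iso f -> free_mor f.
Proof. case=> g [[gf fg] [gf1 _] _]; exact: (iso_free gf fg gf1). Qed.

Lemma iso_bp S T (f : tmor S T) : is_iso f -> boundary_preserving f.
Proof.
case=> g [[gf fg] [gf1 fg1] _] A [hE hN].
split; apply/setP => x; rewrite in_setT.
  rewrite (iso_E gf fg gf1) hE; apply/imsetP; exists (m0 g x); [by rewrite in_setT | by rewrite fg].
rewrite (iso_N gf fg gf1) hN; apply/imsetP.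
case: (iso_node fg gf fg1 x) => n En; exists n; first by rewrite in_setT.
apply: pt_inj; by rewrite ia1_spec En fg.
Qed.

Lemma bp_comp (A B C : tree) (f : tmor A B) (g : tmor B C) (h : tmor A C) :
  boundary_preserving f -> boundary_preserving g -> is_comp f g h -> boundary_preserving h.
Proof. move=> bf bg [_ c1 _] X HX; rewrite c1; exact/bg/bf. Qed.

Lemma free_comp (A B C : tree) (f : tmor A B) (g : tmor B C) (h : tmor A C) :
  free_mor f -> free_mor g -> is_comp f g h -> free_mor h.
Proof.
case=> a0 [a1 [a2 [[hs hp ht hu] [Ha0 HaE]]]].
case=> b0 [b1 [b2 [[ks kp kt ku] [Hb0 HbE]]]] [c0 c1 _].
exists (b0 \o a0), (b1 \o a1), (b2 \o a2); split; last split.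
- split => /=.
  + by move=> x; rewrite ks hs.
  + by move=> x; rewrite kp hp.
  + by move=> x; rewrite kt ht.
  + move=> n y E; case: (ku (a1 n) y E) => y' [[py' Ey'] U'].
    case: (hu n y' py') => x [[px Ex] U]; exists x; split; first by rewrite Ex.
    move=> x' [px' Ex']; apply: U; split => //; apply/esym/U'; split => //.
    by rewrite hp px'.
- by move=> x; rewrite c0 Hb0 Ha0.
- move=> X; rewrite c1 (proj1 (HbE _)) (proj2 (HbE _)) (proj1 (HaE _)) (proj2 (HaE _)).
  by rewrite (imset_comp b0 a0) (imset_comp b1 a1).
Qed.

Lemma lifting (A B C D : tree) (e : tmor A B) (m : tmor C D) (u : tmor A C) (v : tmor B D) :
  boundary_preserving e -> free_mor m -> comm_sq u m e v ->
  exists d : tmor B C, is_comp e d u /\ is_comp d m v /\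
    forall d' : tmor B C, is_comp e d' u -> is_comp d' m v -> meq d d'.
Proof.
move=> be Fm [q0 q1 q2]; have Fm' := Fm.
case: Fm => a0 [a1 [a2 [Ht [Hm0 HmE]]]].
have Emax : m1 e (maxS A) = maxS B by apply: max_eq; apply: be.
have HvE : forall A' x, x \in st_E (m1 v A') -> exists y, a0 y = x.
  move=> A' x xE; case: (sub_max A') => s1 s2; case: (m_mono v s1 s2) => sE _.
  move: (subsetP sE _ xE); rewrite -Emax -q1 (proj1 (HmE _)) => /imsetP [y _ ->].
  by exists y.
have HvN : forall A' x, x \in st_N (m1 v A') -> exists y, a1 y = x.
  move=> A' x xE; case: (sub_max A') => s1 s2; case: (m_mono v s1 s2) => _ sN.
  move: (subsetP sN _ xE); rewrite -Emax -q1 (proj2 (HmE _)) => /imsetP [y _ ->].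
  by exists y.
pose d := dmor Ht Hm0 HmE HvE HvN.
have dc : is_comp d m v := dmor_comp Ht Hm0 HmE HvE HvN.
case: (dc) => dc0 dc1 dc2.
exists d; split; last split => //.
  split.
  - move=> x; apply: (temb_inj0 Ht); by rewrite -!Hm0 q0 dc0.
  - move=> X; apply: (mm_inj1 Ht HmE); by rewrite q1 dc1.
  - move=> x; apply: (mm_inj2 Ht Hm0 HmE); by rewrite q2 dc2.
move=> d' _ dc'; exact: free_unique Fm' dc dc'.
Qed.

Lemma factorisation (S T : tree) (phi : tmor S T) :
  exists (X : tree) (e : tmor S X) (m : tmor X T),
    boundary_preserving e /\ free_mor m /\ is_comp e m phi.
Proof.
pose K := m1 phi (maxS S).
pose X := Xtree K.
pose mm := Xinc K.
have Ht := Xtemb K.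
have Hm0 : forall x, m0 mm x = x0v x by [].
have HmE : forall A, st_E (m1 mm A) = (@x0v _ K) @: st_E A /\ st_N (m1 mm A) = (@x1v _ K) @: st_N A by [].
have HvE : forall (A' : subtree S) (x : P0 T), x \in st_E (m1 phi A') -> exists y, @x0v T K y = x.
  move=> A' x xE; case: (sub_max A') => s1 s2; case: (m_mono phi s1 s2) => sE _.
  by exists (exist _ x (subsetP sE _ xE) : X0 K).
have HvN : forall (A' : subtree S) (x : P1 T), x \in st_N (m1 phi A') -> exists y, @x1v T K y = x.
  move=> A' x xE; case: (sub_max A') => s1 s2; case: (m_mono phi s1 s2) => _ sN.
  by exists (exist _ x (subsetP sN _ xE) : X1 K).
exists X, (dmor Ht Hm0 HmE HvE HvN), mm; split; last split.
- move=> A /max_eq ->.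
  have -> : m1 (dmor Ht Hm0 HmE HvE HvN) (maxS S) = maxS X.
    apply: (mm_inj1 Ht HmE); transitivity (m1 phi (maxS S)); first exact: mm_d1.
    exact: esym (Xinc_max K).
  exact: maxS_max.
- exact: freeOf_free.
- exact: dmor_comp.
Qed.

Lemma comp_cancel (X X' T : tree) (m : tmor X T) (m' : tmor X' T)
  (i : tmor X X') (k : tmor X' X) :
  free_mor m -> is_comp k m m' -> is_comp i m' m ->
  [/\ forall x, m0 k (m0 i x) = x, forall A, m1 k (m1 i A) = A
    & forall x, m2 k (m2 i x) = x].
Proof.
case=> a0 [a1 [a2 [Ht [Hm0 HmE]]]] [k0 k1 k2] [i0 i1 i2]; split.
- move=> x; apply: (temb_inj0 Ht); by rewrite -!Hm0 -k0 -i0.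
- move=> A; apply: (mm_inj1 Ht HmE); by rewrite -k1 -i1.
- move=> x; apply: (mm_inj2 Ht Hm0 HmE); by rewrite -k2 -i2.
Qed.

Theorem mainTheorem13 :
  OFS boundary_preserving free_mor /\
  unique_factorisation boundary_preserving free_mor.
Proof.
split.
  split; first by move=> S T f; exact: iso_bp.
  split; first by move=> S T f; exact: iso_free_mor.
  split; first by move=> A B C f g h; exact: bp_comp.
  split; first by move=> A B C f g h; exact: free_comp.
  split; first by move=> S T phi; exact: factorisation.
  move=> A B C D e m u v; exact: lifting.
move=> S T phi X X' e m e' m' Le Rm [c0 c1 c2] Le' Rm' [c0' c1' c2'].
have sq1 : comm_sq e' m' e m.
  by split => x; rewrite -?c0 -?c1 -?c2 -?c0' -?c1' -?c2'.
have sq2 : comm_sq e m e' m'.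
  by split => x; rewrite -?c0 -?c1 -?c2 -?c0' -?c1' -?c2'.
case: (lifting Le Rm' sq1) => i [ei [im U]].
case: (lifting Le' Rm sq2) => k [ek [km _]].
exists i; split; last by split.
exists k; have [a1 a2 a3] := comp_cancel Rm km im.
have [b1 b2 b3] := comp_cancel Rm' im km.
by split; split.
Qed.
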